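(* Let $\mathcal A\subseteq\mathbb T$, let $\Phi:\mathcal A\to\mathcal A$ be a function, and let $\boldsymbol\alpha$ be a ratio set. Assume: (a) if $\boldsymbol\alpha$ witnesses $S\in\mathcal A$, then $\boldsymbol\alpha$ witnesses $\Phi(S)$; (b) if $S,T\in\mathcal A$ and $\boldsymbol\alpha$ witnesses $S-T$, then $\boldsymbol\alpha$ witnesses $\Phi(S)-\Phi(T)$ and $S-T\succ^{\boldsymbol\alpha}\Phi(S)-\Phi(T)$; (c) if $T_j\in\mathcal A$ ($j=1,2,\dots$) and $T_j$ converges $\boldsymbol\alpha$-geometrically to $T$, then $T\in\mathcal A$; (d) there exists $T_0\in\mathcal A$ such that $\boldsymbol\alpha$ witnesses both $T_0$ and $\Phi(T_0)-T_0$. Then there is $S\in\mathcal A$ with $S=\Phi(S)$.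
   Context: $\mathbb T$ is the field of real grid-based transseries over the ordered group $\mathfrak G$ of transmonomials; $\operatorname{mag}T$ is the dominant monomial of $T\neq0$. A ratio set is a finite $\boldsymbol\alpha\subset\{\mathfrak g\in\mathfrak G:\mathfrak g\prec1\}$; $\boldsymbol\alpha^*$ (resp. $\boldsymbol\alpha^+$) is the set of products of zero or more (resp. one or more) elements of $\boldsymbol\alpha$. For monomials $\mathfrak m\prec^{\boldsymbol\alpha}\mathfrak n$ iff $\mathfrak m/\mathfrak n\in\boldsymbol\alpha^+$; for transseries $A\prec^{\boldsymbol\alpha}B$ (equivalently $B\succ^{\boldsymbol\alpha}A$) iff every $\mathfrak a\in\operatorname{supp}A$ satisfies $\mathfrak a\prec^{\boldsymbol\alpha}\mathfrak b$ for some $\mathfrak b\in\operatorname{supp}B$. $\boldsymbol\alpha$ witnesses a nonzero $T$ iff $\operatorname{supp}T\subseteq(\operatorname{mag}T)\boldsymbol\alpha^*$. A sequence $T_j$ converges $\boldsymbol\alpha$-geometrically to $T$ if for all $j$, $\boldsymbol\alpha$ witnesses $T-T_j$ and $T-T_j\succ^{\boldsymbol\alpha}T-T_{j+1}$. *)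

(* Defs.v *)
From mathcomp Require Import all_boot all_order all_algebra.
From mathcomp Require Import reals.
Set Implicit Arguments. Unset Strict Implicit. Unset Printing Implicit Defensive.
Import Order.TTheory GRing.Theory Num.Theory.
Local Open Scope ring_scope.

(* The group of monomials is written ADDITIVELY: the product m*n of monomials
   is m + n, the quotient m/n is m - n, the unit monomial 1 is 0.
   [le] is the (total, translation-invariant) order of the monomial group;
   [le m n] means m ≼ n. *)
Record ordered_group (G : zmodType) (le : rel G) : Prop := {
  og_refl  : forall x, le x x;
  og_anti  : forall x y, le x y -> le y x -> x = y;
  og_trans : forall x y z, le x y -> le y z -> le x z;
  og_total : forall x y, le x y || le y x;
  og_add   : forall x y z, le x y -> le (x + z) (y + z) }.

Section Transseries.
Variables (G : zmodType) (le : rel G) (R : realType).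

Definition mlt (m n : G) : bool := le m n && (m != n).
Definition small (m : G) : bool := mlt m 0.

Definition supp (T : G -> R) : G -> Prop := fun g => T g != 0.

Definition gstar (s : seq G) (g : G) : Prop :=
  exists k : seq G, all (fun x => x \in s) k /\ g = \sum_(x <- k) x.
Definition gplus (s : seq G) (g : G) : Prop :=
  exists k : seq G, k != [::] /\ all (fun x => x \in s) k /\ g = \sum_(x <- k) x.

Definition grid_based (T : G -> R) : Prop :=
  exists (J mu : seq G), all small mu /\
    forall g, supp T g -> exists j, j \in J /\ exists p, gstar mu p /\ g = j + p.

Definition transseries (T : G -> R) : Prop := grid_based T.

Definition ratio_set (alpha : seq G) : Prop := all small alpha.

Definition alpha_mlt (alpha : seq G) (m n : G) : Prop := gplus alpha (m - n).

Definition alpha_slt (alpha : seq G) (A B : G -> R) : Prop :=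
  forall a, supp A a -> exists b, supp B b /\ alpha_mlt alpha a b.

Definition is_mag (T : G -> R) (m : G) : Prop :=
  supp T m /\ forall g, supp T g -> le g m.

Definition witnesses (alpha : seq G) (T : G -> R) : Prop :=
  exists m, is_mag T m /\ forall g, supp T g -> exists p, gstar alpha p /\ g = m + p.

Definition sub_series (S T : G -> R) : G -> R := fun g => S g - T g.

Definition geom_conv (alpha : seq G) (Ts : nat -> G -> R) (T : G -> R) : Prop :=
  forall j, witnesses alpha (sub_series T (Ts j)) /\
            alpha_slt alpha (sub_series T (Ts j.+1)) (sub_series T (Ts j)).

End Transseries.

(* Main.v *)
From mathcomp Require Import all_boot all_order all_algebra.
From mathcomp Require Import reals zify.
Require Import Defs.
From Stdlib Require Import Classical.
Set Implicit Arguments. Unset Strict Implicit. Unset Printing Implicit Defensive.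
Import Order.TTheory GRing.Theory Num.Theory.
Local Open Scope ring_scope.

Lemma sum_count (T : eqType) (V : nmodType) (f : T -> V) (F k : seq T) :
  uniq F -> all (fun x => x \in F) k ->
  \sum_(x <- k) f x = \sum_(x <- F) f x *+ count_mem x k.
Proof.
move=> uF; elim: k => [|a k IH] /=.
  by move=> _; rewrite big_nil big1 // => x _; rewrite mulr0n.
case/andP=> aF ak; rewrite big_cons IH //.
under [in RHS]eq_bigr => x _ do rewrite mulrnDr.
rewrite big_split /=; congr (_ + _).
rewrite (bigD1_seq a) //= eqxx mulr1n big1 ?addr0 // => x /negbTE.
by rewrite eq_sym => ->; rewrite mulr0n.
Qed.

Lemma size_count (T : eqType) (F k : seq T) :
  uniq F -> all (fun x => x \in F) k ->
  size k = (\sum_(x <- F) count_mem x k)%N.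
Proof.
move=> uF ak; have := sum_count (fun _ => 1%N) uF ak.
rewrite (_ : \sum_(x <- k) 1%N = size k)%N; last by elim: k {ak} => [|? ? IH]; rewrite ?big_nil ?big_cons ?IH.
move=> ->.
apply: eq_bigr => x _; elim: (count_mem x k) => //= n IHn; rewrite mulrS IHn.
by [].
Qed.
Local Close Scope ring_scope.
Lemma bound_list (A : eqType) (P : A -> nat -> Prop) (L : seq A) :
  (forall a B B', B <= B' -> P a B -> P a B') ->
  (forall a, a \in L -> exists B, P a B) -> exists B, forall a, a \in L -> P a B.
Proof.
move=> mono; elim: L => [|a L IH] h; first by exists 0.
have [B1 H1] := h a (mem_head _ _).
have [B2 H2] : exists B, forall a, a \in L -> P a B.
  by apply: IH => b bL; apply: h; rewrite inE bL orbT.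
exists (maxn B1 B2) => b; rewrite inE => /orP [/eqP -> | bL].
  by apply: mono (H1); rewrite leq_maxl.
by apply: mono (H2 _ bL); rewrite leq_maxr.
Qed.

Lemma size_filterC1 (T : eqType) (i : T) (F : seq T) :
  i \in F -> size (filter (predC1 i) F) < size F.
Proof.
move=> iF; rewrite size_filter -(count_predC (pred1 i) F).
have : 0 < count (pred1 i) F by rewrite -has_count has_pred1.
by move: (count _ _) => a; move: (count _ _) => b; lia.
Qed.

Definition ACh (T : eqType) (F : seq T) (X : (T -> nat) -> Prop) :=
  forall y y', X y -> X y' -> (forall i, i \in F -> y i <= y' i) ->
    forall i, i \in F -> y i = y' i.

Lemma ac_bound (T : eqType) n : forall (F : seq T) (X : (T -> nat) -> Prop),
  size F <= n -> ACh F X -> exists B, forall y, X y -> forall i, i \in F -> y i < B.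
Proof.
elim: n => [|n IH] F X hs hac.
  by exists 0 => y _ i; move: hs hac; case: F => //.
case: (classic (exists x, X x)) => [[x Xx]|nX]; last first.
  by exists 0 => y Xy; exfalso; apply: nX; exists y.
have [M HM] : exists M, forall i, i \in F -> x i < M.
  apply: (bound_list (P := fun i B => x i < B)).
    by move=> a B B' h1 h2; apply: leq_trans h2 h1.
  by move=> i _; exists (x i).+1.
have [B HB] : exists B, forall i, i \in F -> forall c, c < x i -> forall y, X y ->
    y i = c -> forall j, j \in F -> j != i -> y j < B.
  apply: (bound_list (P := fun i B => forall c, c < x i -> forall y, X y ->
    y i = c -> forall j, j \in F -> j != i -> y j < B)).
    by move=> a B B' h1 h2 c hc y Xy yc j jF jn; apply: leq_trans (h2 c hc y Xy yc j jF jn) h1.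
  move=> i iF.
  have [B' HB'] : exists B, forall c, c \in iota 0 (x i) -> forall y, X y ->
    y i = c -> forall j, j \in F -> j != i -> y j < B.
    apply: (bound_list (P := fun c B => forall y, X y ->
      y i = c -> forall j, j \in F -> j != i -> y j < B)).
      by move=> a B B' h1 h2 y Xy yc j jF jn; apply: leq_trans (h2 y Xy yc j jF jn) h1.
    move=> c _.
    have hs' : size (filter (predC1 i) F) <= n.
      by have := size_filterC1 iF; lia.
    have hac' : ACh (filter (predC1 i) F) (fun y => X y /\ y i = c).
      move=> y y' [Xy yi] [Xy' yi'] hle j; rewrite mem_filter => /andP [jn jF].
      apply: (hac y y' Xy Xy' _ j jF) => k kF.
      case: (eqVneq k i) => [->|kn]; first by rewrite yi yi'.
      by apply: hle; rewrite mem_filter /= kn kF.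
    have [B0 HB0] := IH _ _ hs' hac'.
    exists B0 => y Xy yc j jF jn; apply: (HB0 y) => //.
    by rewrite mem_filter /= jn jF.
  exists B' => c hc; apply: HB'; rewrite mem_iota; lia.
exists (maxn M B) => y Xy j jF.
case: (classic (forall k, k \in F -> x k <= y k)) => [hge|hn].
  rewrite -(hac x y Xx Xy hge j jF); apply: leq_trans (HM j jF) _; exact: leq_maxl.
have [k [kF hk]] : exists k, k \in F /\ y k < x k.
  apply: NNPP => hne; apply: hn => k kF; rewrite leqNgt; apply/negP => h.
  by apply: hne; exists k.
case: (eqVneq j k) => [->|jn].
  by apply: leq_trans (leq_trans hk (ltnW (HM k kF))) _; rewrite leq_maxl.
by apply: leq_trans (HB k kF (y k) hk y Xy erefl j jF jn) _; rewrite leq_maxr.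
Qed.

Local Open Scope ring_scope.
Section GS.
Variables (G : zmodType) (le : rel G).
Hypothesis Hog : ordered_group le.

Lemma le_add0 x y : le x 0 -> le y 0 -> le (x + y) 0.
Proof.
move=> hx hy; apply: (og_trans Hog) hy.
by have := og_add Hog y hx; rewrite add0r.
Qed.

Lemma mlt_add0 x y : mlt le x 0 -> le y 0 -> mlt le (x + y) 0.
Proof.
case/andP=> hx nx hy; rewrite /mlt le_add0 //=; apply/eqP => e.
have : le 0 x by have := og_add Hog x hy; rewrite addrC e add0r.
by move=> h; move/eqP: nx; apply; apply: (og_anti Hog).
Qed.

Lemma le_muln x n : le x 0 -> le (x *+ n) 0.
Proof.
move=> hx; elim: n => [|n IH]; first by rewrite mulr0n (og_refl Hog).
by rewrite mulrS le_add0.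
Qed.

Lemma mlt_muln x n : mlt le x 0 -> (0 < n)%N -> mlt le (x *+ n) 0.
Proof.
move=> hx; case: n => // n _; rewrite mulrS mlt_add0 // le_muln //.
by case/andP: hx.
Qed.

Lemma sum_le0 (F : seq G) (n : G -> nat) : all (small le) F ->
  le (\sum_(x <- F) x *+ n x) 0.
Proof.
elim: F => [|a F IH] /=; first by rewrite big_nil (og_refl Hog).
case/andP=> /andP [ha _] hF; rewrite big_cons le_add0 ?IH // le_muln //.
Qed.

Lemma sum_lt0 (F : seq G) (n : G -> nat) : all (small le) F ->
  (exists2 x, x \in F & (0 < n x)%N) -> mlt le (\sum_(x <- F) x *+ n x) 0.
Proof.
elim: F => [|a F IH] /=; first by move=> _ [x].
case/andP=> ha hF [x]; rewrite inE big_cons => /orP [/eqP -> | xF] hn.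
  by rewrite mlt_add0 ?mlt_muln ?sum_le0.
by rewrite addrC mlt_add0 ?(IH hF) //; [exists x | rewrite le_muln //; case/andP: ha].
Qed.

Lemma sum_le_const (T : eqType) (F : seq T) (f : T -> nat) B :
  (forall x, x \in F -> (f x <= B)%N) -> (\sum_(x <- F) f x <= size F * B)%N.
Proof.
elim: F => [|a F IH] h; first by rewrite big_nil.
rewrite big_cons /= mulSn leq_add ?h ?mem_head // IH // => x xF.
by apply: h; rewrite inE xF orbT.
Qed.

Lemma depth_bound (alpha : seq G) : all (small le) alpha -> forall p : G,
  exists K, forall k, all (fun x => x \in alpha) k -> \sum_(x <- k) x = p ->
    (size k < K)%N.
Proof.
move=> Hal p; set F := undup alpha.
have uF : uniq F by apply: undup_uniq.
have aF : forall k, all (fun x => x \in alpha) k -> all (fun x => x \in F) k.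
  by move=> k /allP h; apply/allP => x /h; rewrite mem_undup.
have HalF : all (small le) F by apply/allP => x; rewrite mem_undup => /(allP Hal).
pose X (y : G -> nat) := exists k, all (fun x => x \in alpha) k /\
  \sum_(x <- k) x = p /\ forall x, y x = count_mem x k.
have hac : ACh F X.
  move=> y y' [k [ak [sk ek]]] [k' [ak' [sk' ek']]] hle i iF.
  apply: NNPP => hne.
  have hlt : mlt le (\sum_(x <- F) x *+ (y' x - y x)%N) 0.
    apply: sum_lt0 => //; exists i => //.
    by have := hle i iF; lia.
  move: hlt; rewrite (eq_big_seq (fun x => x *+ y' x - x *+ y x)); last first.
    by move=> x xF; rewrite mulrnBr // hle.
  rewrite sumrB.
  rewrite (eq_bigr (fun x => x *+ count_mem x k')); last by move=> x _; rewrite ek'.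
  rewrite [X in _ - X](eq_bigr (fun x => x *+ count_mem x k)); last by move=> x _; rewrite ek.
  rewrite -!(sum_count id uF) ?aF // sk sk' subrr.
  by case/andP=> _; rewrite eqxx.
have [B HB] := ac_bound (n := size F) (leqnn _) hac.
exists (size F * B).+1 => k ak sk; rewrite ltnS (size_count uF (aF _ ak)).
apply: sum_le_const => x xF; apply: ltnW; apply: (HB (fun x => count_mem x k)) => //.
by exists k.
Qed.


Lemma gstar_add (a : seq G) p q : gstar a p -> gstar a q -> gstar a (p + q).
Proof.
move=> [k [ak ->]] [k' [ak' ->]]; exists (k ++ k'); rewrite all_cat ak ak'.
by rewrite big_cat.
Qed.

Lemma gplus_add (a : seq G) p q : gplus a p -> gstar a q -> gplus a (p + q).
Proof.
move=> [k [nk [ak ->]]] [k' [ak' ->]]; exists (k ++ k'); rewrite all_cat ak ak'.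
by rewrite big_cat; split => //; move: nk; rewrite -!size_eq0 size_cat; case: (size k).
Qed.

Lemma gplus_star (a : seq G) p : gplus a p -> gstar a p.
Proof. by move=> [k [_ h]]; exists k. Qed.

Lemma gstar0 (a : seq G) : gstar a 0.
Proof. by exists [::]; rewrite big_nil. Qed.

Lemma gstar_cat (a b : seq G) p : gstar b p -> gstar (a ++ b) p.
Proof.
move=> [k [ak ->]]; exists k; split => //; apply/allP => x /(allP ak).
by rewrite mem_cat orbC => ->.
Qed.

Lemma gstar_le (a : seq G) p : all (small le) a -> gstar a p -> le p 0.
Proof.
move=> ha [k [ak ->]]; elim: k ak => [|x k IH] /=; first by rewrite big_nil (og_refl Hog).
case/andP=> xa ak; rewrite big_cons le_add0 ?IH //.
by have /andP [] := allP ha x xa.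
Qed.

Lemma gplus_lt (a : seq G) p : all (small le) a -> gplus a p -> mlt le p 0.
Proof.
move=> ha [[|x k] [//= _ [/andP [xa ak] ->]]].
rewrite big_cons mlt_add0 //; first exact: (allP ha).
by apply: (gstar_le ha); exists k.
Qed.

Lemma gstar_catl (a b : seq G) p : gstar a p -> gstar (a ++ b) p.
Proof.
move=> [k [ak ->]]; exists k; split => //; apply/allP => x /(allP ak).
by rewrite mem_cat => ->.
Qed.

End GS.

From Stdlib Require Import FunctionalExtensionality ClassicalEpsilon.

Theorem proposition6p1 (G : zmodType) (le : rel G) (R : realType)
  (Hog : ordered_group le)
  (A : (G -> R) -> Prop) (HA : forall S, A S -> transseries le S)
  (Phi : (G -> R) -> (G -> R)) (HPhi : forall S, A S -> A (Phi S))
  (alpha : seq G) (Halpha : ratio_set le alpha)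
  (Ha : forall S, A S -> witnesses le alpha S -> witnesses le alpha (Phi S))
  (Hb : forall S T, A S -> A T -> witnesses le alpha (sub_series S T) ->
          witnesses le alpha (sub_series (Phi S) (Phi T)) /\
          alpha_slt alpha (sub_series (Phi S) (Phi T)) (sub_series S T))
  (Hc : forall (Ts : nat -> G -> R) (T : G -> R), (forall j, A (Ts j)) ->
          transseries le T -> geom_conv le alpha Ts T -> A T)
  (Hd : exists T0, A T0 /\ witnesses le alpha T0 /\
          witnesses le alpha (sub_series (Phi T0) T0)) :
  exists S, A S /\ S = Phi S.
Proof.
move: Hd => [T0 [AT0 [wT0 wD0]]].
pose Ts j := iter j Phi T0.
have ATs : forall j, A (Ts j) by elim => //= j IH; apply: HPhi.
pose D j := sub_series (Ts j.+1) (Ts j).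
have wD : forall j, witnesses le alpha (D j).
  elim => // j IH; exact: (Hb _ _ (ATs j.+1) (ATs j) IH).1.
have sD : forall j, alpha_slt alpha (D j.+1) (D j).
  move=> j; exact: (Hb _ _ (ATs j.+1) (ATs j) (wD j)).2.
have [m0 [[m0s m0m] m0w]] := wD0.
pose Depth j g := exists k, all (fun x => x \in alpha) k /\ (j <= size k)%N /\
  g = m0 + \sum_(x <- k) x.
have Dep_mono : forall j j' g, (j <= j')%N -> Depth j' g -> Depth j g.
  move=> j j' g h [k [ak [hk e]]]; exists k; split => //; split => //.
  exact: leq_trans h hk.
have Dep_star : forall j g h, Depth j g -> gstar alpha (h - g) -> Depth j h.
  move=> j g h [k [ak [hk e]]] [k' [ak' e']]; exists (k ++ k').
  rewrite all_cat ak ak' size_cat big_cat /= addrA -e -e' addrC subrK.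
  by split => //; split => //; apply: leq_trans hk (leq_addr _ _).
have Dep_plus : forall j g h, Depth j g -> gplus alpha (h - g) -> Depth j.+1 h.
  move=> j g h [k [ak [hk e]]] [k' [nk' [ak' e']]]; exists (k ++ k').
  rewrite all_cat ak ak' size_cat big_cat /= addrA -e -e' addrC subrK.
  split => //; split => //; move: nk'; rewrite -size_eq0; case: (size k') => //.
  by move=> n _; rewrite addnS ltnS; apply: leq_trans hk (leq_addr _ _).
have DD : forall j g, supp (D j) g -> Depth j g.
  elim => [|j IH] g hg.
    have [p [[k [ak ->]] ->]] := m0w g hg.
    by exists k.
  have [b [hb hgb]] := sD j g hg.
  exact: Dep_plus (IH b hb) hgb.
have Hal : all (small le) alpha by [].
have fin : forall g, exists N, forall i, (N <= i)%N -> D i g = 0.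
  move=> g; have [K HK] := depth_bound Hog Hal (g - m0).
  exists K => i hi; apply: NNPP => hne.
  have [k [ak [hk e]]] := DD i g (introN eqP hne).
  have := HK k ak; rewrite e addrC addKr => /(_ erefl); lia.
pose N g := proj1_sig (constructive_indefinite_description _ (fin g)).
have HN : forall g i, (N g <= i)%N -> D i g = 0.
  by move=> g; exact: (proj2_sig (constructive_indefinite_description _ (fin g))).
pose T g := Ts (N g) g.
have stab : forall g j, (forall i, (j <= i)%N -> D i g = 0) ->
    forall i, (j <= i)%N -> Ts i g = Ts j g.
  move=> g j h; elim => [|i IH] hi; first by have -> : j = 0%N by lia.
  case: (eqVneq j i.+1) => [-> //|ne].
  have hji : (j <= i)%N by lia.
  have := h i hji; rewrite /D /sub_series => /eqP; rewrite subr_eq0 => /eqP ->.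
  exact: IH.
have Tval : forall g j, (forall i, (j <= i)%N -> D i g = 0) -> T g = Ts j g.
  move=> g j h; rewrite /T -(stab g j h (maxn j (N g))) ?leq_maxl //.
  rewrite (stab g (N g) (HN g) (maxn j (N g))) ?leq_maxr //.
have suppT : forall j g, sub_series T (Ts j) g != 0 ->
    exists2 i, (j <= i)%N & D i g != 0.
  move=> j g hg; apply: NNPP => hne; move/eqP: hg; apply.
  rewrite /sub_series (Tval g j) ?subrr // => i hi; apply: NNPP => hn.
  by apply: hne; exists i => //; apply/eqP.
have TDep : forall j g, supp (sub_series T (Ts j)) g -> Depth j g.
  move=> j g /suppT [i hi /DD hd]; exact: Dep_mono hi hd.
have below : forall j m, (forall g, supp (D j) g -> exists p, gstar alpha p /\ g = m + p) ->
    forall i g, (j < i)%N -> supp (D i) g -> gplus alpha (g - m).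
  move=> j m hm; elim => [//|i IH] g hi hg.
  have [b [hb hgb]] := sD i g hg.
  case: (eqVneq i j) => [e|ne].
    subst i; have [p [hp e]] := hm b hb.
    have e' : g - m = (g - b) + p by rewrite e opprD addrA subrK.
    by rewrite e'; apply: gplus_add.
  have e' : g - m = (g - b) + (b - m) by rewrite addrA subrK.
  rewrite e'; apply: gplus_add => //; apply: gplus_star; apply: IH hb; lia.
have wTj : forall j, exists m, D j m != 0 /\ sub_series T (Ts j) m = D j m /\
    (forall g, supp (sub_series T (Ts j)) g -> gstar alpha (g - m)) /\
    (forall g, supp (sub_series T (Ts j.+1)) g -> gplus alpha (g - m)).
  move=> j; have [m [[ms mm] mw]] := wD j.
  have bl := below j m mw.
  exists m; split => //; split.
    rewrite /sub_series (Tval m j.+1) // => i hi; apply: NNPP => hne.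
    have := gplus_lt Hog Hal (bl i m hi (introN eqP hne)).
    by rewrite subrr /mlt eqxx andbF.
  split.
    move=> g /suppT [i hi hD]; case: (eqVneq i j) => [e|ne].
      subst i; have [p [hp ->]] := mw g hD; by rewrite addrC addKr.
    apply: gplus_star; apply: bl hD; lia.
  move=> g /suppT [i hi hD]; apply: bl hD; lia.
have wT : forall j, witnesses le alpha (sub_series T (Ts j)).
  move=> j; have [m [hm [Tm [h1 _]]]] := wTj j.
  exists m; split; first split.
  - by rewrite /supp Tm.
  - move=> g /h1 /(gstar_le Hog Hal) hle.
    by have := og_add Hog m hle; rewrite subrK add0r.
  - move=> g /h1 hp; exists (g - m); split => //.
    by rewrite addrCA subrr addr0.
have geom : geom_conv le alpha Ts T.
  move=> j; split => //.
  have [m [hm [Tm [_ h2]]]] := wTj j.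
  move=> a /h2 ha; exists m; split => //; by rewrite /supp Tm.
have trT : transseries le T.
  have [J0 [mu0 [smu0 hg0]]] := HA T0 AT0.
  exists (m0 :: J0), (alpha ++ mu0); split; first by rewrite all_cat Hal smu0.
  move=> g hg; case: (eqVneq (T g) (T0 g)) => e.
    have hT0 : supp T0 g by rewrite /supp -e.
    have [j [jJ [p [hp ->]]]] := hg0 g hT0.
    exists j; split; first by rewrite inE jJ orbT.
    by exists p; split => //; apply: gstar_cat.
  have hs : supp (sub_series T (Ts 0)) g by rewrite /supp /sub_series subr_eq0.
  have [k [ak [_ ->]]] := TDep 0%N g hs.
  exists m0; split; first exact: mem_head.
  exists (\sum_(x <- k) x); split => //; apply: gstar_catl; by exists k.
have AT : A T by apply: (Hc Ts).
exists T; split => //; apply: functional_extensionality => g; apply: NNPP => hne.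
have dep : forall j, Depth j g.
  move=> j; have [_ hs] := Hb T (Ts j) AT (ATs j) (wT j).
  case: (eqVneq (sub_series T (Ts j.+1) g) 0) => h; last first.
    exact: Dep_mono (leqnSn j) (TDep j.+1 g h).
  have hP : supp (sub_series (Phi T) (Phi (Ts j))) g.
    move: h; rewrite /supp /sub_series => /eqP; rewrite subr_eq0 => /eqP e.
    rewrite /= in e; rewrite -e subr_eq0; apply/eqP => e2; apply: hne; by rewrite e2.
  have [b [hb hgb]] := hs g hP.
  exact: Dep_mono (leqnSn j) (Dep_plus _ _ _ (TDep j b hb) hgb).
have [K HK] := depth_bound Hog Hal (g - m0).
have [k [ak [hk e]]] := dep K.
have := HK k ak; rewrite e addrC addKr => /(_ erefl); lia.
Qed.
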